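(* Let $a,b$ be coprime integers with $|a|\ge b\ge 2$, and let $\mathcal{D}=\{0,1,\ldots,|a|-1\}$. Let $x\in\mathbb{R}$, and if $\tfrac{a}{b}>0$ assume $x>0$. Let $k\in\mathbb{Z}$ and $(d_j)_{j\le k}$ be a sequence in $\mathcal{D}$ with $d_k\neq 0$ such that the series $\sum_{j\le k} d_j\left(\tfrac{a}{b}\right)^j$ converges to $x$ in $\mathbb{C}$. Then this series is an $\tfrac{a}{b}$-expansion of $x$ if and only if it converges to $0$ in $\mathbb{Q}_p$ for every prime $p$ dividing $b$.
   Context: An $\tfrac{a}{b}$-expansion of $x$ is an expression $x=\sum_{j\le k} d_j\left(\tfrac{a}{b}\right)^j$ with $d_j\in\mathcal{D}$ and $d_k\neq 0$ such that for every integer $l\le k$ the number $N_l:=\sum_{j=l}^{k} d_j\left(\tfrac{a}{b}\right)^{j-l}$ lies in $b\mathbb{Z}$ (equivalently, $d_k\ldots d_l$ is the integer $\tfrac ab$-expansion of an element of $b\mathbb{Z}$, obtained by repeatedly applying the map $b\mathbb{Z}\to b\mathbb{Z}$, $N\mapsto \tfrac{b}{a}(N-d)$ with $d\in\mathcal{D}$ the unique digit making the result lie in $b\mathbb{Z}$, until reaching $0$). $\mathbb{Q}_p$ denotes the field of $p$-adic numbers. *)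

(* Defs.v *)
From HB Require Import structures.
From mathcomp Require Import all_boot all_order all_algebra.
From mathcomp Require Import all_classical all_reals all_analysis.
Set Implicit Arguments. Unset Strict Implicit. Unset Printing Implicit Defensive.
Import Order.TTheory GRing.Theory Num.Theory numFieldNormedType.Exports.
Local Open Scope classical_set_scope.
Local Open Scope ring_scope.

Definition ab_ratio (a b : int) : rat := a%:~R / b%:~R.

(* n-th partial sum of sum_{j<=k} d_j (a/b)^j : sum over j = k, k-1, ..., k-n *)
Definition ab_partial_sum (a b k : int) (d : int -> int) (n : nat) : rat :=
  \sum_(0 <= i < n.+1) (d (k - i%:Z))%:~R * ab_ratio a b ^ (k - i%:Z).

(* N_l = sum_{j=l}^{k} d_j (a/b)^(j-l)  (for l <= k; j = k - i, 0 <= i <= k - l) *)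
Definition ab_Nl (a b k l : int) (d : int -> int) : rat :=
  \sum_(0 <= i < (absz (k - l)).+1) (d (k - i%:Z))%:~R * ab_ratio a b ^ (k - i%:Z - l).

Definition ab_in_bZ (b : int) (q : rat) : Prop := exists z : int, q = (b * z)%:~R.

Definition ab_padic_val (p : nat) (q : rat) : int :=
  (logn p (absz (numq q)))%:Z - (logn p (absz (denq q)))%:Z.
Definition ab_padic_abs (p : nat) (q : rat) : rat :=
  if q == 0 then 0 else (p%:R : rat) ^ (- ab_padic_val p q).

Definition converges_to_0_Qp (p : nat) (s : nat -> rat) : Prop :=
  forall eps : rat, 0 < eps -> exists N : nat, forall n : nat, (N <= n)%N -> ab_padic_abs p (s n) < eps.

Definition ab_is_digit (a : int) (e : int) : bool := (0 <= e) && (e < `|a|).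

Definition is_ab_expansion (R : realType) (a b : int) (x : R) (k : int) (d : int -> int) : Prop :=
  [/\ (forall j : int, j <= k -> ab_is_digit a (d j)),
      d k != 0,
      (fun n : nat => (ratr (ab_partial_sum a b k d n) : R)) @ \oo --> x
    & (forall l : int, l <= k -> ab_in_bZ b (ab_Nl a b k l d))].

(* Main.v *)
Require Import Defs.
From HB Require Import structures.
From mathcomp Require Import all_boot all_order all_algebra.
From mathcomp Require Import all_classical all_reals all_analysis.
From mathcomp Require Import ring zify.
Import Order.TTheory GRing.Theory Num.Theory numFieldNormedType.Exports.
Local Open Scope classical_set_scope.
Local Open Scope ring_scope.

Definition Mn (a b k : int) (d : int -> int) (n : nat) : int :=
  \sum_(0 <= i < n.+1) d (k - i%:Z) * a ^+ (n - i) * b ^+ i.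

Lemma sumr_Mn (a b k : int) (d : int -> int) (n : nat) : b != 0 ->
  \sum_(0 <= i < n.+1) (d (k - i%:Z))%:~R * ab_ratio a b ^+ (n - i)
   = (Mn a b k d n)%:~R / (b%:~R ^+ n) :> rat.
Proof.
move=> hb; rewrite /Mn rmorph_sum /= mulr_suml; apply: eq_big_nat => i /andP[_ hi].
have hbq : (b%:~R : rat) != 0 by rewrite intr_eq0.
rewrite /ab_ratio !rmorphM /= !rmorphXn /=.
have e : (b%:~R : rat) ^+ n = b%:~R ^+ (n - i) * b%:~R ^+ i by rewrite -exprD subnK.
rewrite e expr_div_n; field.
by rewrite !expf_neq0.
Qed.

Lemma Nl_eq (a b k : int) (d : int -> int) (n : nat) : b != 0 ->
  ab_Nl a b k (k - n%:Z) d = (Mn a b k d n)%:~R / (b%:~R ^+ n).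
Proof.
move=> hb; rewrite /ab_Nl -sumr_Mn //.
have -> : absz (k - (k - n%:Z))%R = n.
  by have -> : k - (k - n%:Z) = n%:Z by ring.
apply: eq_big_nat => i /andP[_ hi].
have -> : k - i%:Z - (k - n%:Z) = (n - i)%N :> int by lia.
by [].
Qed.

Lemma ratio_neq0 (a b : int) : a != 0 -> b != 0 -> ab_ratio a b != 0.
Proof. by move=> ha hb; rewrite /ab_ratio mulf_neq0 ?invr_eq0 ?intr_eq0. Qed.

Lemma Sn_eq (a b k : int) (d : int -> int) (n : nat) : a != 0 -> b != 0 ->
  ab_partial_sum a b k d n = (Mn a b k d n)%:~R / (b%:~R ^+ n) * ab_ratio a b ^ (k - n%:Z).
Proof.
move=> ha hb; rewrite /ab_partial_sum -sumr_Mn // mulr_suml.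
apply: eq_big_nat => i /andP[_ hi].
rewrite -mulrA; congr (_ * _).
have -> : ab_ratio a b ^+ (n - i) = ab_ratio a b ^ ((n - i)%N : int) by [].
rewrite -expfzDr ?ratio_neq0 //; congr (_ ^ _); lia.
Qed.

Lemma Mn_split (a b k : int) (d : int -> int) (n m : nat) : (n <= m)%N ->
  exists T : int, Mn a b k d m = a ^+ (m - n) * Mn a b k d n + b ^+ n.+1 * T.
Proof.
move=> hnm.
exists (\sum_(n.+1 <= i < m.+1) d (k - i%:Z) * a ^+ (m - i) * b ^+ (i - n.+1)).
rewrite /Mn (@big_cat_nat _ _ _ n.+1) //=; congr (_ + _).
  rewrite mulr_sumr; apply: eq_big_nat => i /andP[_ hi].
  have -> : (m - i = (m - n) + (n - i))%N by lia.
  rewrite exprD; ring.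
rewrite mulr_sumr; apply: eq_big_nat => i /andP[hi _].
have e : b ^+ i = b ^+ n.+1 * b ^+ (i - n.+1) by rewrite -exprD subnKC.
rewrite e; ring.
Qed.

Lemma val_rep (p : nat) (u w : int) : u != 0 -> w != 0 ->
  ab_padic_val p (u%:~R / w%:~R) = (logn p `|u|)%:Z - (logn p `|w|)%:Z.
Proof.
move=> hu hw; set q := u%:~R / w%:~R.
have h : numq q * w = u * denq q.
  apply: (@intr_inj rat); rewrite !intrM; apply/eqP.
  by rewrite -eqr_div ?intr_eq0 ?denq_neq0 // divq_num_den /q.
have h2 : (`|numq q| * `|w| = `|u| * `|denq q|)%N by rewrite -!abszM h.
have hq : q != 0 by rewrite /q mulf_neq0 ?invr_eq0 ?intr_eq0.
have := congr1 (logn p) h2.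
rewrite !lognM ?absz_gt0 ?numq_eq0 ?denq_neq0 // => h3.
rewrite /ab_padic_val; lia.
Qed.

Lemma val_mul (p : nat) (x y : rat) : x != 0 -> y != 0 ->
  ab_padic_val p (x * y) = ab_padic_val p x + ab_padic_val p y.
Proof.
move=> hx hy.
have -> : x * y = (numq x * numq y)%:~R / (denq x * denq y)%:~R
  by rewrite !intrM -mulf_div !divq_num_den.
rewrite val_rep ?mulf_neq0 ?numq_eq0 ?denq_neq0 //.
rewrite !abszM !lognM ?absz_gt0 ?numq_eq0 ?denq_neq0 //.
rewrite /ab_padic_val; lia.
Qed.

Lemma val_inv (p : nat) (x : rat) : x != 0 -> ab_padic_val p x^-1 = - ab_padic_val p x.
Proof.
move=> hx.
have -> : x^-1 = (denq x)%:~R / (numq x)%:~R by rewrite -{1}[x]divq_num_den invf_div.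
rewrite val_rep ?numq_eq0 ?denq_neq0 // /ab_padic_val; lia.
Qed.

Lemma val1 (p : nat) : ab_padic_val p 1 = 0.
Proof.
have -> : (1 : rat) = 1%:~R / 1%:~R by rewrite divr1.
by rewrite val_rep // logn1.
Qed.

Lemma val_expn (p : nat) (x : rat) (n : nat) : x != 0 ->
  ab_padic_val p (x ^+ n) = n%:Z * ab_padic_val p x.
Proof.
move=> hx; elim: n => [|n IH]; first by rewrite expr0 val1 mul0r.
rewrite exprS val_mul ?expf_neq0 // IH; lia.
Qed.

Lemma val_expz (p : nat) (x : rat) (z : int) : x != 0 ->
  ab_padic_val p (x ^ z) = z * ab_padic_val p x.
Proof.
move=> hx; case: z => n; first exact: val_expn.
change (ab_padic_val p ((x ^+ n.+1)^-1) = Negz n * ab_padic_val p x).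
rewrite val_inv ?expf_neq0 // val_expn // NegzE; ring.
Qed.

Lemma val_Sn (p : nat) (a b k : int) (d : int -> int) (n : nat) :
  a != 0 -> b != 0 -> coprime p `|a| -> Mn a b k d n != 0 ->
  ab_partial_sum a b k d n != 0 /\
  ab_padic_val p (ab_partial_sum a b k d n)
    = (logn p `|Mn a b k d n|)%:Z - k * (logn p `|b|)%:Z.
Proof.
move=> ha hb hpa hM.
have hbn : (b%:~R : rat) ^+ n = (b ^+ n)%:~R by rewrite rmorphXn.
have hbn0 : (b ^+ n) != 0 by rewrite expf_neq0.
have hr := @ratio_neq0 a b ha hb.
have hA : (Mn a b k d n)%:~R / (b%:~R ^+ n) != 0 :> rat.
  by rewrite hbn mulf_neq0 ?invr_eq0 ?intr_eq0.
rewrite Sn_eq //; split; first by rewrite mulf_neq0 ?expfz_neq0.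
rewrite val_mul ?expfz_neq0 // val_expz // hbn val_rep //.
rewrite /ab_ratio val_rep // abszX lognX (logn_coprime hpa) PoszM; ring.
Qed.

Lemma bZ_iff (a b k : int) (d : int -> int) (n : nat) : b != 0 ->
  ab_in_bZ b (ab_Nl a b k (k - n%:Z) d) <-> (b ^+ n.+1 %| Mn a b k d n)%Z.
Proof.
move=> hb; rewrite Nl_eq //.
have hbq : (b%:~R : rat) != 0 by rewrite intr_eq0.
split.
  case=> z hz; apply/dvdzP; exists z.
  apply: (@intr_inj rat).
  move/(congr1 (fun t => t * b%:~R ^+ n)): hz.
  rewrite mulfVK ?expf_neq0 // => ->.
  by rewrite !intrM rmorphXn /= exprS; ring.
case/dvdzP=> z hz; exists z.
rewrite hz !intrM !rmorphXn /= exprS -[RHS](mulfK (expf_neq0 n hbq)); congr (_ / _); ring.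
Qed.

Theorem mainTheorem2 (R : realType) (a b : int) (x : R) (k : int) (d : int -> int) :
  coprimez a b -> b <= `|a| -> 2 <= b ->
  (0 < ab_ratio a b -> 0 < x) ->
  (forall j : int, j <= k -> ab_is_digit a (d j)) ->
  d k != 0 ->
  (fun n : nat => (ratr (ab_partial_sum a b k d n) : R)) @ \oo --> x ->
  (is_ab_expansion a b x k d <->
   (forall p : nat, prime p -> (p %| absz b)%N -> converges_to_0_Qp p (ab_partial_sum a b k d))).
Proof.
move=> hab hba hb2 _ hdig hdk hcv.
have hb0 : b != 0 by apply/eqP => e; rewrite e in hb2.
have ha0 : a != 0 by apply/eqP => e; move: hba; rewrite e normr0 => h; move: (le_trans hb2 h).
have hcop : coprime `|b| `|a| by rewrite coprime_sym; exact: hab.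
have key_p : forall p, (p %| `|b|)%N -> coprime p `|a|.
  by move=> p pb; exact: coprime_dvdl pb hcop.
split.
- case=> _ _ _ hN p pp pb eps heps.
  have hM : forall n, (`|b| ^ n.+1 %| `|Mn a b k d n|)%N.
    move=> n; have hl : k - n%:Z <= k by lia.
    have := (@bZ_iff a b k d n hb0).1 (hN _ hl).
    by rewrite /dvdz abszX.
  have hp0 : (0 < (p%:R : rat)) by rewrite ltr0n prime_gt0.
  exists (Num.Def.archi_bound (((p%:R : rat) ^ (k * (logn p `|b|)%:Z)) / eps)).
  move=> n hn.
  rewrite /ab_padic_abs; case: eqP => [_|/eqP hS]; first exact: heps.
  have hMn : Mn a b k d n != 0.
    by apply: contra hS => /eqP h; rewrite Sn_eq // h mulr0z !mul0r.
  have [_ hv] := @val_Sn p a b k d n ha0 hb0 (key_p p pb) hMn.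
  rewrite hv.
  set L := logn p `|Mn a b k d n|.
  have hL : (n.+1 <= L)%N.
    rewrite /L -pfactor_dvdn ?absz_gt0 //.
    apply: dvdn_trans (hM n); exact: dvdn_exp2r.
  set C := (p%:R : rat) ^ (k * (logn p `|b|)%:Z).
  have -> : - (L%:Z - k * (logn p `|b|)%:Z) = k * (logn p `|b|)%:Z + - L%:Z by ring.
  rewrite expfzDr ?gt_eqF // -/C -exprnN.
  rewrite ltr_pdivrMr ?exprn_gt0 // mulrC -ltr_pdivrMr //.
  apply: lt_le_trans (archi_boundP _) _.
    by rewrite divr_ge0 ?ltW ?exprz_gt0.
  rewrite -natrX ler_nat.
  apply: leq_trans hn _.
  exact: leq_trans (ltnW hL) (ltnW (ltn_expl L (prime_gt1 pp))).
- move=> hp; split => // l hl.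
  have hl' : l = k - (absz (k - l))%:Z by rewrite gez0_abs ?subr_ge0 //; ring.
  rewrite hl'; move: (absz _) => n.
  apply/(@bZ_iff a b k d n hb0).
  case: (eqVneq (Mn a b k d n) 0) => [->|hMn]; first exact: dvdz0.
  rewrite /dvdz abszX.
  apply/dvdn_partP; first by rewrite expn_gt0 absz_gt0 hb0.
  move=> q; rewrite mem_primes => /and3P[pq _ qdiv].
  have qb : (q %| `|b|)%N by move: qdiv; rewrite Euclid_dvdX // => /andP[].
  rewrite p_part lognX.
  set vb := logn q `|b|.
  set E := (n.+1 * vb)%N.
  have hqa := key_p q qb.
  have hq0 : (0 < (q%:R : rat)) by rewrite ltr0n prime_gt0.
  have [N hN] := hp q pq qb ((q%:R : rat) ^ (k * vb%:Z - E%:Z)) (exprz_gt0 _ hq0).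
  set m := maxn N n.
  have hm := hN m (leq_maxl N n).
  have [T hT] := @Mn_split a b k d n m (leq_maxr N n).
  have hdm : (q ^ E %| `|Mn a b k d m|)%N.
    case: (eqVneq (Mn a b k d m) 0) => [->|hMm]; first by rewrite dvdn0.
    have [hS hv] := @val_Sn q a b k d m ha0 hb0 hqa hMm.
    move: hm; rewrite /ab_padic_abs (negbTE hS) hv.
    rewrite pfactor_dvdn ?absz_gt0 //.
    set L := logn q `|Mn a b k d m|.
    move=> hlt; rewrite leqNgt; apply/negP => hLE.
    have : (q%:R : rat) ^ (k * vb%:Z - E%:Z) <= (q%:R : rat) ^ (- (L%:Z - k * vb%:Z)).
      have e : (E - L)%N%:Z = E%:Z - L%:Z by rewrite subzn // ltnW.
      have -> : - (L%:Z - k * vb%:Z) = (k * vb%:Z - E%:Z) + (E - L)%N%:Z by rewrite e; ring.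
      rewrite [X in _ <= X]expfzDr ?gt_eqF //.
      apply: ler_peMr; first exact: ltW (exprz_gt0 _ hq0).
      by apply: exprn_ege1; rewrite ler1n prime_gt0.
    by rewrite leNgt hlt.
  have hdb : (q ^ E %| `|b| ^ n.+1)%N.
    rewrite /E mulnC expnM; apply: dvdn_exp2r.
    by rewrite pfactor_dvdn ?absz_gt0.
  have : ((q ^ E)%:Z %| a ^+ (m - n) * Mn a b k d n)%Z.
    have -> : a ^+ (m - n) * Mn a b k d n = Mn a b k d m - b ^+ n.+1 * T
      by rewrite hT; ring.
    have h1 : ((q ^ E)%:Z %| Mn a b k d m)%Z by rewrite /dvdz absz_nat.
    have h2 : ((q ^ E)%:Z %| b ^+ n.+1 * T)%Z.
      have h3 : ((q ^ E)%:Z %| b ^+ n.+1)%Z.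
        by rewrite unfold_in /= abszX.
      exact: dvdz_mulr T h3.
    by rewrite rpredB.
  rewrite Gauss_dvdzr; first by rewrite /dvdz absz_nat.
  rewrite /coprimez /gcdz absz_nat abszX.
  change (coprime (q ^ E) (`|a| ^ (m - n))).
  by apply: coprimeXl; apply: coprimeXr.
Qed.
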